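(* Let $G$ be a connected graph on $n\ge2$ vertices, $\alpha\in\mathbb{R}$, with vertices labeled so that $({}^\alpha\mathbb{M})_1\ge({}^\alpha\mathbb{M})_2\ge\cdots\ge({}^\alpha\mathbb{M})_n$. Let $N=\max_{1\le i,j\le n} d_{ij}\mathbb{D}_j^\alpha/\mathbb{D}_i^\alpha$. Then for $1\le i\le n$, \[\rho(\mathbb{D}(G))\le \frac{({}^\alpha\mathbb{M})_i-N+\sqrt{(({}^\alpha\mathbb{M})_i+N)^2+4N\sum_{k=1}^{i-1}\big(({}^\alpha\mathbb{M})_k-({}^\alpha\mathbb{M})_i\big)}}{2}.\] Equality holds if and only if $({}^\alpha\mathbb{M})_1=\cdots=({}^\alpha\mathbb{M})_n$, or for some $2\le t\le i$: (i) $d_{kl}\mathbb{D}_l^\alpha/\mathbb{D}_k^\alpha=N$ for all $1\le k\le n$, $1\le l\le t-1$, $k\ne l$; (ii) $({}^\alpha\mathbb{M})_t=\cdots=({}^\alpha\mathbb{M})_n$.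
   Context: $\mathbb{D}(G)=(d_{ij})$ is the distance matrix of $G$, $d_{ij}$ the distance between $v_i$ and $v_j$. The transmission of $v_i$ is $\mathbb{D}_i=\sum_{j}d_{ij}$. The generalized average transmission is $({}^\alpha\mathbb{M})_i=\frac{\sum_{j=1}^n d_{ij}\mathbb{D}_j^\alpha}{\mathbb{D}_i^\alpha}$. $\rho$ is the spectral radius. An empty sum equals $0$. *)

(* Defs.v *)
From Stdlib Require Import Reals Lra Lia.
Open Scope R_scope.

(* Vertices of a graph on n vertices are 0, ..., n-1.
   A simple graph is given by a boolean adjacency relation. *)
Definition simple_graph (n : nat) (adj : nat -> nat -> bool) : Prop :=
  (forall i j, (i < n)%nat -> (j < n)%nat -> adj i j = adj j i) /\
  (forall i, (i < n)%nat -> adj i i = false).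

Inductive walk (n : nat) (adj : nat -> nat -> bool) : nat -> nat -> nat -> Prop :=
| walk_nil : forall i, (i < n)%nat -> walk n adj i i 0
| walk_cons : forall i m j k, (i < n)%nat -> (m < n)%nat -> adj i m = true ->
    walk n adj m j k -> walk n adj i j (S k).

Definition connected (n : nat) (adj : nat -> nat -> bool) : Prop :=
  forall i j, (i < n)%nat -> (j < n)%nat -> exists k, walk n adj i j k.

Definition is_distance_matrix (n : nat) (adj : nat -> nat -> bool)
  (d : nat -> nat -> nat) : Prop :=
  forall i j, (i < n)%nat -> (j < n)%nat ->
    walk n adj i j (d i j) /\ (forall k, walk n adj i j k -> (d i j <= k)%nat).

Fixpoint rsum (f : nat -> R) (m : nat) : R :=
  match m with
  | O => 0
  | S m' => rsum f m' + f m'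
  end.

Fixpoint rmax (f : nat -> R) (m : nat) : R :=
  match m with
  | O => 0
  | S m' => Rmax (rmax f m') (f m')
  end.

Definition transmission (n : nat) (d : nat -> nat -> nat) (i : nat) : R :=
  rsum (fun j => INR (d i j)) n.

Definition gen_avg_trans (n : nat) (d : nat -> nat -> nat) (alpha : R) (i : nat) : R :=
  rsum (fun j => INR (d i j) * Rpower (transmission n d j) alpha) n
    / Rpower (transmission n d i) alpha.

Definition ratio (n : nat) (d : nat -> nat -> nat) (alpha : R) (i j : nat) : R :=
  INR (d i j) * Rpower (transmission n d j) alpha / Rpower (transmission n d i) alpha.

(* N = max_{i,j} d_ij D_j^alpha / D_i^alpha  (all ratios are >= 0 and the
   diagonal ones are 0, so starting the max at 0 is harmless). *)
Definition Nmax (n : nat) (d : nat -> nat -> nat) (alpha : R) : R :=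
  rmax (fun i => rmax (fun j => ratio n d alpha i j) n) n.

(* a + i b is a (complex) eigenvalue of the real n x n matrix A:
   there is a nonzero complex vector x + i y with A (x + i y) = (a + i b)(x + i y). *)
Definition is_eigenvalue (n : nat) (A : nat -> nat -> R) (a b : R) : Prop :=
  exists x y : nat -> R,
    (exists i, (i < n)%nat /\ (x i <> 0 \/ y i <> 0)) /\
    (forall i, (i < n)%nat ->
       rsum (fun j => A i j * x j) n = a * x i - b * y i /\
       rsum (fun j => A i j * y j) n = b * x i + a * y i).

Definition is_spectral_radius (n : nat) (A : nat -> nat -> R) (r : R) : Prop :=
  (exists a b, is_eigenvalue n A a b /\ r = sqrt (a ^ 2 + b ^ 2)) /\
  (forall a b, is_eigenvalue n A a b -> sqrt (a ^ 2 + b ^ 2) <= r).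

Definition dist_matrix_R (d : nat -> nat -> nat) : nat -> nat -> R :=
  fun i j => INR (d i j).

(* Main.v *)
Require Import Defs.
From Stdlib Require Import Reals Lra Lia Psatz Classical Wf_nat.
Open Scope R_scope.

Lemma rsum_ext (f g : nat -> R) m :
  (forall k, (k < m)%nat -> f k = g k) -> rsum f m = rsum g m.
Proof.
  induction m; intros H; simpl; auto.
  rewrite IHm by (intros; apply H; lia). rewrite H by lia. reflexivity.
Qed.

Lemma rsum_plus (f g : nat -> R) m :
  rsum (fun k => f k + g k) m = rsum f m + rsum g m.
Proof. induction m; simpl; [lra|rewrite IHm; lra]. Qed.

Lemma rsum_minus (f g : nat -> R) m :
  rsum (fun k => f k - g k) m = rsum f m - rsum g m.
Proof. induction m; simpl; [lra|rewrite IHm; lra]. Qed.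

Lemma rsum_scal (c : R) (f : nat -> R) m :
  rsum (fun k => c * f k) m = c * rsum f m.
Proof. induction m; simpl; [lra|rewrite IHm; lra]. Qed.

Lemma rsum_scalr (c : R) (f : nat -> R) m :
  rsum (fun k => f k * c) m = rsum f m * c.
Proof. induction m; simpl; [lra|rewrite IHm; lra]. Qed.

Lemma rsum_zero m : rsum (fun _ => 0) m = 0.
Proof. induction m; simpl; [lra|rewrite IHm; lra]. Qed.

Lemma rsum_le (f g : nat -> R) m :
  (forall k, (k < m)%nat -> f k <= g k) -> rsum f m <= rsum g m.
Proof.
  induction m; intros H; simpl; [lra|].
  assert (rsum f m <= rsum g m) by (apply IHm; intros; apply H; lia).
  assert (f m <= g m) by (apply H; lia). lra.
Qed.

Lemma rsum_nonneg (f : nat -> R) m :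
  (forall k, (k < m)%nat -> 0 <= f k) -> 0 <= rsum f m.
Proof.
  intros H. rewrite <- (rsum_zero m). apply rsum_le. auto.
Qed.

Lemma rsum_split (f : nat -> R) m k : (k < m)%nat ->
  rsum f m = rsum (fun l => if Nat.eqb l k then 0 else f l) m + f k.
Proof.
  induction m; intros Hk; [lia|]. simpl.
  destruct (Nat.eq_dec k m) as [->|Hne].
  - rewrite Nat.eqb_refl.
    rewrite (rsum_ext (fun l => if Nat.eqb l m then 0 else f l) f m).
    + lra.
    + intros l Hl. destruct (Nat.eqb_spec l m); [lia|auto].
  - rewrite IHm by lia. destruct (Nat.eqb_spec m k); [lia|]. lra.
Qed.

Lemma rsum_ge_term (f : nat -> R) m k :
  (forall l, (l < m)%nat -> 0 <= f l) -> (k < m)%nat -> f k <= rsum f m.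
Proof.
  intros H Hk. rewrite (rsum_split f m k Hk).
  assert (0 <= rsum (fun l => if Nat.eqb l k then 0 else f l) m).
  { apply rsum_nonneg. intros l Hl. destruct (Nat.eqb l k); [lra|auto]. }
  lra.
Qed.

Lemma rsum_eq0 (f : nat -> R) m :
  (forall l, (l < m)%nat -> 0 <= f l) -> rsum f m = 0 ->
  forall l, (l < m)%nat -> f l = 0.
Proof.
  intros H Hs l Hl. pose proof (rsum_ge_term f m l H Hl). pose proof (H l Hl). lra.
Qed.

Lemma rsum_eq_term (f : nat -> R) m k :
  (forall l, (l < m)%nat -> 0 <= f l) -> (k < m)%nat -> rsum f m = f k ->
  forall l, (l < m)%nat -> l <> k -> f l = 0.
Proof.
  intros H Hk Hs l Hl Hlk.
  rewrite (rsum_split f m k Hk) in Hs.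
  assert (E : rsum (fun l => if Nat.eqb l k then 0 else f l) m = 0) by lra.
  assert (Hn : forall l, (l < m)%nat -> 0 <= (if Nat.eqb l k then 0 else f l)).
  { intros l' Hl'. destruct (Nat.eqb l' k); [lra|auto]. }
  pose proof (rsum_eq0 _ m Hn E l Hl) as Z.
  simpl in Z. destruct (Nat.eqb_spec l k); [lia|auto].
Qed.

Lemma rsum_only_term (f : nat -> R) m k :
  (k < m)%nat -> (forall l, (l < m)%nat -> l <> k -> f l = 0) -> rsum f m = f k.
Proof.
  intros Hk H. rewrite (rsum_split f m k Hk).
  rewrite (rsum_ext _ (fun _ => 0)). rewrite rsum_zero; lra.
  intros l Hl. destruct (Nat.eqb_spec l k); auto.
Qed.

Lemma rsum_pos (f : nat -> R) m k :
  (forall l, (l < m)%nat -> 0 <= f l) -> (k < m)%nat -> 0 < f k -> 0 < rsum f m.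
Proof. intros H Hk Hp. pose proof (rsum_ge_term f m k H Hk). lra. Qed.

Lemma rsum_swap (F : nat -> nat -> R) m1 m2 :
  rsum (fun k => rsum (fun l => F k l) m2) m1 =
  rsum (fun l => rsum (fun k => F k l) m1) m2.
Proof.
  induction m1; simpl.
  - rewrite rsum_zero. reflexivity.
  - rewrite IHm1. rewrite <- rsum_plus. reflexivity.
Qed.

Lemma rsum_trunc (f : nat -> R) m j : (j <= m)%nat ->
  rsum (fun l => if Nat.ltb l j then f l else 0) m = rsum f j.
Proof.
  induction m; intros Hj.
  - replace j with 0%nat by lia. reflexivity.
  - destruct (Nat.eq_dec j (S m)) as [->|Hne].
    + apply rsum_ext. intros k Hk. destruct (Nat.ltb_spec k (S m)); [auto|lia].
    + simpl. rewrite IHm by lia. destruct (Nat.ltb_spec m j); [lia|lra].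
Qed.

Lemma rsum_tail_zero (f : nat -> R) t i : (t <= i)%nat ->
  (forall k, (t <= k)%nat -> (k < i)%nat -> f k = 0) -> rsum f i = rsum f t.
Proof.
  induction i; intros Ht H.
  - replace t with 0%nat by lia. reflexivity.
  - destruct (Nat.eq_dec t (S i)) as [->|Hne]; [reflexivity|].
    simpl. rewrite IHi; [rewrite H by lia; lra|lia|intros; apply H; lia].
Qed.

Lemma rmax_ge (f : nat -> R) m k : (k < m)%nat -> f k <= rmax f m.
Proof.
  induction m; intros Hk; [lia|]. simpl.
  destruct (Nat.eq_dec k m) as [->|Hne].
  - apply Rmax_r.
  - eapply Rle_trans; [apply IHm; lia| apply Rmax_l].
Qed.

Lemma rmax_nonneg (f : nat -> R) m : 0 <= rmax f m.
Proof.
  induction m; simpl; [lra|]. eapply Rle_trans; [apply IHm|apply Rmax_l].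
Qed.

Definition Av (m:nat) (A:nat->nat->R) (x:nat->R) (k:nat) := rsum (fun l => A k l * x l) m.
Definition bil m A (x y : nat -> R) := rsum (fun k => x k * Av m A y k) m.
Definition Qf m A x := bil m A x x.
Definition nrm m (x : nat -> R) := rsum (fun k => x k * x k) m.
Definition symm m (A : nat -> nat -> R) := forall k l, (k<m)%nat -> (l<m)%nat -> A k l = A l k.

Lemma bil_sym m A x y : symm m A -> bil m A x y = bil m A y x.
Proof.
  intros HS. unfold bil, Av.
  rewrite (rsum_ext (fun k => x k * rsum (fun l => A k l * y l) m)
      (fun k => rsum (fun l => x k * A k l * y l) m)).
  2:{ intros k Hk. rewrite <- rsum_scal. apply rsum_ext. intros; ring. }
  rewrite rsum_swap. apply rsum_ext. intros l Hl.
  rewrite <- rsum_scal. apply rsum_ext. intros k Hk. rewrite (HS k l) by auto. ring.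
Qed.

Lemma Av_lin m A a b x y k :
  Av m A (fun l => a * x l + b * y l) k = a * Av m A x k + b * Av m A y k.
Proof.
  unfold Av. rewrite <- !rsum_scal, <- rsum_plus. apply rsum_ext; intros; ring.
Qed.

Lemma bil_lin1 m A a b x y z :
  bil m A (fun l => a * x l + b * y l) z = a * bil m A x z + b * bil m A y z.
Proof.
  unfold bil. rewrite <- !rsum_scal, <- rsum_plus. apply rsum_ext; intros; ring.
Qed.

Lemma bil_lin2 m A a b x y z :
  bil m A z (fun l => a * x l + b * y l) = a * bil m A z x + b * bil m A z y.
Proof.
  unfold bil. rewrite <- !rsum_scal, <- rsum_plus. apply rsum_ext; intros k Hk.
  rewrite Av_lin. ring.
Qed.

Lemma nrm_nonneg m x : 0 <= nrm m x.
Proof. apply rsum_nonneg. intros. nra. Qed.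

Lemma nrm_zero m x : nrm m x = 0 -> forall k, (k<m)%nat -> x k = 0.
Proof.
  intros H k Hk. assert (x k * x k = 0).
  { apply (rsum_eq0 (fun k => x k * x k) m); auto. intros; nra. }
  nra.
Qed.

Lemma psd_zero m B x : symm m B -> (forall y, 0 <= Qf m B y) -> Qf m B x = 0 ->
  forall k, (k<m)%nat -> Av m B x k = 0.
Proof.
  intros HS HP HQ.
  set (y := fun k => Av m B x k).
  assert (Hexp : forall t, Qf m B (fun l => 1 * x l + t * y l) =
     2 * t * nrm m y + t * t * Qf m B y).
  { intro t. unfold Qf. rewrite bil_lin1, !bil_lin2.
    rewrite (bil_sym m B x y HS). unfold Qf in HQ. rewrite HQ.
    assert (bil m B y x = nrm m y) as ->.
    { unfold bil, nrm. apply rsum_ext. intros; reflexivity. }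
    ring. }
  assert (Hg : nrm m y = 0).
  { set (g := nrm m y). set (q := Qf m B y).
    assert (0 <= g) by apply nrm_nonneg. assert (0 <= q) by apply HP.
    pose proof (HP (fun l => 1 * x l + (- g / (q+1)) * y l)) as H1.
    rewrite Hexp in H1. fold g q in H1.
    destruct (Req_dec g 0) as [E|E]; auto. exfalso.
    assert (0 < g) by lra.
    assert (Hq1 : 0 < q + 1) by lra.
    replace (2 * (- g / (q + 1)) * g + - g / (q + 1) * (- g / (q + 1)) * q)
      with (g * g * (- q - 2) / ((q+1)*(q+1))) in H1 by (field; lra).
    assert (0 < g * g * (q + 2) / ((q+1)*(q+1))).
    { apply Rdiv_lt_0_compat; nra. }
    replace (g * g * (- q - 2) / ((q+1)*(q+1))) with (- (g * g * (q + 2) / ((q+1)*(q+1)))) in H1 by (field; lra).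
    lra. }
  intros k Hk. apply (nrm_zero m y Hg k Hk).
Qed.

Lemma cauchy_schwarz m a b :
  (rsum (fun k => a k * b k) m)^2 <= nrm m a * nrm m b.
Proof.
  induction m; unfold nrm in *; simpl; [lra|].
  set (C := rsum (fun k => a k * b k) m) in *.
  set (A := rsum (fun k => a k * a k) m) in *.
  set (B := rsum (fun k => b k * b k) m) in *.
  assert (0 <= A) by (apply rsum_nonneg; intros; nra).
  assert (0 <= B) by (apply rsum_nonneg; intros; nra).
  set (x := a m) in *. set (y := b m) in *.
  assert (H2 : (2*x*y*C)^2 <= (x*x*B + y*y*A)^2).
  { replace ((2*x*y*C)^2) with (4*(x*y)^2 * C^2) by ring.
    assert (4*(x*y)^2 * C^2 <= 4*(x*y)^2*(A*B)) by (apply Rmult_le_compat_l; nra).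
    assert (0 <= (x*x*B - y*y*A)^2) by apply pow2_ge_0.
    nra. }
  assert (2*x*y*C <= x*x*B + y*y*A).
  { assert (0 <= x*x*B + y*y*A) by nra.
    destruct (Rle_dec (2*x*y*C) 0); [lra|].
    apply Rsqr_incr_0_var; unfold Rsqr; nra. }
  nra.
Qed.

Lemma Qf_ext m B x y : (forall k, (k<m)%nat -> x k = y k) -> Qf m B x = Qf m B y.
Proof.
  intros H. unfold Qf, bil, Av. apply rsum_ext. intros k Hk. rewrite H by auto.
  f_equal. apply rsum_ext. intros l Hl. rewrite H by auto. reflexivity.
Qed.

Lemma nrm_S m x : nrm (S m) x = nrm m x + x m * x m.
Proof. reflexivity. Qed.

Lemma Qf_S m B x : symm (S m) B ->
  Qf (S m) B x = Qf m B x + 2 * x m * rsum (fun l => B m l * x l) m + B m m * x m * x m.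
Proof.
  intros HS. unfold Qf, bil, Av. simpl.
  rewrite (rsum_ext (fun k => x k * (rsum (fun l => B k l * x l) m + B k m * x m))
     (fun k => x k * rsum (fun l => B k l * x l) m + x m * (B m k * x k))).
  2:{ intros k Hk. rewrite (HS k m) by lia. ring. }
  rewrite rsum_plus, rsum_scal. ring.
Qed.

Definition schur m (B : nat -> nat -> R) k l := B k l - B m k * B m l / B m m.

Lemma Qf_schur m B x : symm (S m) B -> B m m <> 0 ->
  Qf m (schur m B) x = Qf m B x - (rsum (fun l => B m l * x l) m)^2 / B m m.
Proof.
  intros HS Hb. unfold Qf, bil, Av, schur.
  set (w := rsum (fun l => B m l * x l) m).
  rewrite (rsum_ext (fun k => x k * rsum (fun l => (B k l - B m k * B m l / B m m) * x l) m)
    (fun k => x k * rsum (fun l => B k l * x l) m - (w / B m m) * (B m k * x k))).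
  2:{ intros k Hk. rewrite (rsum_ext _ (fun l => B k l * x l - (B m k / B m m) * (B m l * x l))).
      2:{ intros; field; auto. }
      rewrite rsum_minus, rsum_scal. fold w. field; auto. }
  rewrite rsum_minus, rsum_scal. fold w. field; auto.
Qed.

Lemma symm_schur m B : symm (S m) B -> symm m (schur m B).
Proof.
  intros HS k l Hk Hl. unfold schur. rewrite (HS k l) by lia. unfold Rdiv. ring.
Qed.

Lemma psd_dich m : forall B, symm m B -> (forall x, 0 <= Qf m B x) ->
  (exists x, (exists k, (k<m)%nat /\ x k <> 0) /\ Qf m B x = 0) \/
  (exists c, 0 < c /\ forall x, c * nrm m x <= Qf m B x).
Proof.
  induction m as [|m IH]; intros B HS HP.
  - right. exists 1. split; [lra|]. intros x. unfold nrm, Qf, bil. simpl. lra.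
  - set (b := B m m).
    set (e := fun k => if Nat.eqb k m then 1 else 0).
    assert (He : Qf (S m) B e = b).
    { rewrite Qf_S by auto. unfold e. rewrite Nat.eqb_refl.
      rewrite (Qf_ext m B _ (fun _ => 0)).
      2:{ intros k Hk. destruct (Nat.eqb_spec k m); [lia|auto]. }
      rewrite (rsum_ext _ (fun _ => 0)).
      2:{ intros k Hk. destruct (Nat.eqb_spec k m); [lia|ring]. }
      rewrite rsum_zero. unfold Qf, bil, Av. rewrite (rsum_ext _ (fun _ => 0)).
      2:{ intros; ring. }
      rewrite rsum_zero. unfold b. ring. }
    assert (Hb0 : 0 <= b) by (rewrite <- He; apply HP).
    destruct (Req_dec b 0) as [Hb|Hb].
    { left. exists e. split; [exists m; split; [lia|]; unfold e; rewrite Nat.eqb_refl; lra|].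
      lra. }
    assert (Hbp : 0 < b) by lra.
    set (wx := fun x => rsum (fun l => B m l * x l) m).
    set (ext := fun x => fun k => if Nat.eqb k m then - wx x / b else x k).
    assert (Hext : forall x, Qf (S m) B (ext x) = Qf m (schur m B) x).
    { intros x. rewrite Qf_S by auto. rewrite Qf_schur by auto.
      rewrite (Qf_ext m B (ext x) x).
      2:{ intros k Hk. unfold ext. destruct (Nat.eqb_spec k m); [lia|auto]. }
      rewrite (rsum_ext (fun l => B m l * ext x l) (fun l => B m l * x l)).
      2:{ intros k Hk. unfold ext. destruct (Nat.eqb_spec k m); [lia|auto]. }
      unfold ext. rewrite Nat.eqb_refl. fold (wx x). fold b. field. lra. }
    assert (HPs : forall x, 0 <= Qf m (schur m B) x).
    { intros x. rewrite <- Hext. apply HP. }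
    destruct (IH (schur m B) (symm_schur m B HS) HPs) as [[x [[k [Hk Hxk]] HQ]]|[c [Hc HQ]]].
    + left. exists (ext x). split.
      * exists k. split; [lia|]. unfold ext. destruct (Nat.eqb_spec k m); [lia|auto].
      * rewrite Hext. auto.
    + right.
      set (K := nrm m (fun l => B m l) / (b * b)).
      assert (HK : 0 <= K).
      { unfold K. apply Rmult_le_pos; [apply nrm_nonneg| apply Rlt_le, Rinv_0_lt_compat; nra]. }
      set (c2 := Rmin (c / (1 + 2*K)) (b / 2)).
      assert (Hc2 : 0 < c2).
      { unfold c2. apply Rmin_glb_lt; [apply Rdiv_lt_0_compat; lra| lra]. }
      exists c2. split; auto. intros x.
      assert (Hdec : Qf (S m) B x = Qf m (schur m B) x + b * (x m + wx x / b)^2).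
      { rewrite Qf_S by auto. rewrite Qf_schur by auto. fold b. unfold wx. field. lra. }
      rewrite Hdec, nrm_S.
      set (p := wx x / b).
      assert (Hp : p^2 <= K * nrm m x).
      { unfold p, K. pose proof (cauchy_schwarz m (fun l => B m l) x) as CS.
        unfold wx. replace ((rsum (fun l => B m l * x l) m / b)^2)
          with ((rsum (fun l => B m l * x l) m)^2 / (b*b)) by (field; lra).
        replace (nrm m (fun l => B m l) / (b * b) * nrm m x)
          with (nrm m (fun l => B m l) * nrm m x / (b*b)) by (field; lra).
        apply Rmult_le_compat_r; [apply Rlt_le, Rinv_0_lt_compat; nra| exact CS]. }
      pose proof (HQ x) as HQx.
      assert (Hn0 : 0 <= nrm m x) by apply nrm_nonneg.
      assert (0 <= (x m + 2*p)^2) by apply pow2_ge_0.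
      assert (Hxm : x m * x m <= 2 * (x m + p)^2 + 2 * K * nrm m x) by nra.
      assert (Hc2a : c2 * (1 + 2*K) <= c).
      { assert (Hm : c2 <= c / (1 + 2*K)) by apply Rmin_l.
        apply (Rmult_le_compat_r (1 + 2*K)) in Hm; [|lra].
        replace (c / (1 + 2 * K) * (1 + 2 * K)) with c in Hm by (field; lra). lra. }
      assert (Hc2b : c2 <= b / 2) by apply Rmin_r.
      assert (0 <= (x m + p)^2) by apply pow2_ge_0.
      nra.
Qed.

Lemma Qf_dbl m A x : Qf m A x = rsum (fun k => rsum (fun l => x k * A k l * x l) m) m.
Proof.
  unfold Qf, bil, Av. apply rsum_ext. intros k Hk. rewrite <- rsum_scal.
  apply rsum_ext. intros; ring.
Qed.

Lemma Qf_scal m A c y : Qf m A (fun k => c * y k) = c * c * Qf m A y.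
Proof.
  rewrite !Qf_dbl. rewrite <- rsum_scal. apply rsum_ext. intros k Hk.
  rewrite <- rsum_scal. apply rsum_ext. intros; ring.
Qed.

Lemma nrm_scal m c y : nrm m (fun k => c * y k) = c * c * nrm m y.
Proof.
  unfold nrm. rewrite <- rsum_scal. apply rsum_ext. intros; ring.
Qed.

Lemma Qf_zero m A y : (forall k, (k<m)%nat -> y k = 0) -> Qf m A y = 0.
Proof.
  intros H. rewrite Qf_dbl. rewrite (rsum_ext _ (fun _ => 0)). apply rsum_zero.
  intros k Hk. rewrite (rsum_ext _ (fun _ => 0)). apply rsum_zero.
  intros l Hl. rewrite H by auto. ring.
Qed.

Definition delta (k l : nat) : R := if Nat.eqb k l then 1 else 0.

Lemma rsum_delta m k (f : nat -> R) : (k < m)%nat ->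
  rsum (fun l => delta k l * f l) m = f k.
Proof.
  intros Hk. rewrite (rsum_only_term _ m k Hk).
  - unfold delta. rewrite Nat.eqb_refl. ring.
  - intros l Hl Hlk. unfold delta. destruct (Nat.eqb_spec k l); [lia|ring].
Qed.

Lemma perron m A : (1 <= m)%nat -> symm m A ->
  (forall k l, (k<m)%nat -> (l<m)%nat -> 0 <= A k l) ->
  exists mu x, (forall k, (k<m)%nat -> 0 <= x k) /\
    (exists k, (k<m)%nat /\ x k <> 0) /\
    (forall k, (k<m)%nat -> Av m A x k = mu * x k).
Proof.
  intros Hm HS HA.
  set (E := fun r => exists y, nrm m y = 1 /\ r = Qf m A y).
  set (K := rsum (fun k => rsum (fun l => A k l) m) m).
  assert (HB : bound E).
  { exists K. intros r [y [Hy ->]]. rewrite Qf_dbl. unfold K.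
    apply rsum_le. intros k Hk. apply rsum_le. intros l Hl.
    assert (y k * y k <= 1).
    { rewrite <- Hy. apply (rsum_ge_term (fun k => y k * y k)); auto. intros; nra. }
    assert (y l * y l <= 1).
    { rewrite <- Hy. apply (rsum_ge_term (fun k => y k * y k)); auto. intros; nra. }
    assert (y k * y l <= 1) by nra.
    pose proof (HA k l Hk Hl). nra. }
  set (e0 := fun k : nat => if Nat.eqb k 0 then 1 else 0).
  assert (HE : exists r, E r).
  { exists (Qf m A e0). exists e0. split; auto.
    unfold nrm. rewrite (rsum_only_term _ m 0) by (lia || (intros l Hl Hl0; unfold e0; destruct (Nat.eqb_spec l 0); [lia|ring])).
    unfold e0. simpl. ring. }
  destruct (completeness E HB HE) as [mu [Hub Hlub]].
  assert (Hray : forall y, Qf m A y <= mu * nrm m y).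
  { intros y. pose proof (nrm_nonneg m y) as Hn.
    destruct (Req_dec (nrm m y) 0) as [Z|NZ].
    - rewrite Qf_zero. rewrite Z. lra. apply nrm_zero; auto.
    - set (c := / sqrt (nrm m y)).
      assert (Hs : 0 < sqrt (nrm m y)) by (apply sqrt_lt_R0; lra).
      assert (Hcc : c * c * nrm m y = 1).
      { unfold c. pose proof (sqrt_sqrt (nrm m y) Hn) as Hss.
        rewrite <- Hss at 3. field. lra. }
      assert (Hz : E (Qf m A (fun k => c * y k))).
      { exists (fun k => c * y k). split; auto. rewrite nrm_scal. auto. }
      apply Hub in Hz. rewrite Qf_scal in Hz.
      assert (Hc2 : 0 < c * c) by (unfold c; apply Rmult_lt_0_compat; apply Rinv_0_lt_compat; auto).
      assert (Hmu : c * c * (mu * nrm m y) = mu).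
      { transitivity (mu * (c * c * nrm m y)); [ring| rewrite Hcc; ring]. }
      assert (Hf : c * c * Qf m A y <= c * c * (mu * nrm m y)) by lra.
      apply Rmult_le_reg_l in Hf; auto. }
  set (B := fun k l => mu * delta k l - A k l).
  assert (HSB : symm m B).
  { intros k l Hk Hl. unfold B, delta. rewrite (HS k l) by auto.
    destruct (Nat.eqb_spec k l); destruct (Nat.eqb_spec l k); try lia; ring. }
  assert (HAvB : forall y k, (k<m)%nat -> Av m B y k = mu * y k - Av m A y k).
  { intros y k Hk. unfold Av, B.
    rewrite (rsum_ext _ (fun l => mu * (delta k l * y l) - A k l * y l)) by (intros; ring).
    rewrite rsum_minus, rsum_scal, rsum_delta by auto. reflexivity. }
  assert (HQB : forall y, Qf m B y = mu * nrm m y - Qf m A y).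
  { intros y. unfold Qf at 1, bil.
    rewrite (rsum_ext _ (fun k => mu * (y k * y k) - y k * Av m A y k)).
    - rewrite rsum_minus, rsum_scal. reflexivity.
    - intros k Hk. rewrite HAvB by auto. ring. }
  assert (HPB : forall y, 0 <= Qf m B y).
  { intros y. rewrite HQB. pose proof (Hray y). lra. }
  destruct (psd_dich m B HSB HPB) as [[x [[k0 [Hk0 Hx0]] HQ]]|[c [Hc HQ]]].
  - set (ax := fun k => Rabs (x k)).
    assert (Hle : Qf m A x <= Qf m A ax).
    { rewrite !Qf_dbl. apply rsum_le. intros k Hk. apply rsum_le. intros l Hl.
      unfold ax. pose proof (HA k l Hk Hl).
      assert (x k * x l <= Rabs (x k) * Rabs (x l)).
      { rewrite <- Rabs_mult. apply Rle_abs. }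
      nra. }
    assert (Hn : nrm m ax = nrm m x).
    { unfold nrm, ax. apply rsum_ext. intros k Hk. rewrite <- Rabs_mult.
      apply Rabs_pos_eq. nra. }
    assert (HQa : Qf m B ax = 0).
    { pose proof (HPB ax) as H1. rewrite HQB in *. rewrite Hn in *. lra. }
    exists mu, ax. split; [intros; apply Rabs_pos|]. split.
    + exists k0. split; auto. unfold ax. apply Rabs_no_R0. auto.
    + intros k Hk. pose proof (psd_zero m B ax HSB HPB HQa k Hk) as Z.
      rewrite HAvB in Z by auto. lra.
  - exfalso.
    assert (Hup : is_upper_bound E (mu - c)).
    { intros r [y [Hy ->]]. pose proof (HQ y). rewrite HQB, Hy in H. lra. }
    apply Hlub in Hup. lra.
Qed.

Lemma sqrt_le_sq a b : 0 <= b -> a <= b * b -> sqrt a <= b.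
Proof.
  intros Hb H. rewrite <- (sqrt_square b Hb). apply sqrt_le_1_alt. auto.
Qed.

Lemma minkowski2 p q r s :
  sqrt ((p+q)^2 + (r+s)^2) <= sqrt (p^2 + r^2) + sqrt (q^2 + s^2).
Proof.
  set (U := sqrt (p^2 + r^2)). set (V := sqrt (q^2 + s^2)).
  assert (HU : U * U = p^2 + r^2) by (apply sqrt_sqrt; nra).
  assert (HV : V * V = q^2 + s^2) by (apply sqrt_sqrt; nra).
  assert (0 <= U) by apply sqrt_pos. assert (0 <= V) by apply sqrt_pos.
  assert (Hc : (p*q + r*s)^2 <= (U*V)^2).
  { replace ((U*V)^2) with ((U*U)*(V*V)) by ring. rewrite HU, HV.
    assert (0 <= (p*s - q*r)^2) by apply pow2_ge_0. nra. }
  assert (p*q + r*s <= U*V).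
  { destruct (Rle_dec (p*q+r*s) 0). nra. apply Rsqr_incr_0_var; unfold Rsqr; nra. }
  apply sqrt_le_sq; nra.
Qed.

Lemma tri m (A x y : nat -> R) : (forall l, (l<m)%nat -> 0 <= A l) ->
  sqrt ((rsum (fun l => A l * x l) m)^2 + (rsum (fun l => A l * y l) m)^2)
  <= rsum (fun l => A l * sqrt (x l ^2 + y l ^2)) m.
Proof.
  induction m; intros HA; cbn [rsum].
  - apply sqrt_le_sq; [lra| simpl; nra].
  - eapply Rle_trans; [apply minkowski2|].
    apply Rplus_le_compat; [apply IHm; intros; apply HA; lia|].
    assert (0 <= A m) by (apply HA; lia).
    apply sqrt_le_sq. apply Rmult_le_pos; auto; apply sqrt_pos.
    replace (A m * sqrt (x m ^ 2 + y m ^ 2) * (A m * sqrt (x m ^ 2 + y m ^ 2)))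
      with (A m * A m * (sqrt (x m ^ 2 + y m ^ 2) * sqrt (x m ^ 2 + y m ^ 2))) by ring.
    rewrite sqrt_sqrt by nra. nra.
Qed.

Lemma spectral m A : (2 <= m)%nat -> symm m A ->
  (forall k l, (k<m)%nat -> (l<m)%nat -> 0 <= A k l) ->
  (forall k l, (k<m)%nat -> (l<m)%nat -> k <> l -> 0 < A k l) ->
  exists mu p, (forall k, (k<m)%nat -> 0 < p k) /\
    (forall k, (k<m)%nat -> Av m A p k = mu * p k) /\
    is_spectral_radius m A mu.
Proof.
  intros Hm HS HA HA'.
  destruct (perron m A ltac:(lia) HS HA) as [mu [x [Hx0 [[k0 [Hk0 Hxk0]] Hev]]]].
  assert (Hxk0p : 0 < x k0) by (pose proof (Hx0 k0 Hk0); lra).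
  assert (Hoth : forall k, (k<m)%nat -> k <> k0 -> 0 < mu * x k).
  { intros k Hk Hne. rewrite <- Hev by auto. unfold Av.
    apply (rsum_pos _ m k0); auto.
    - intros l Hl. apply Rmult_le_pos; auto.
    - apply Rmult_lt_0_compat; auto. }
  set (k1 := if Nat.eqb k0 0 then 1%nat else 0%nat).
  assert (Hk1 : (k1 < m)%nat /\ k1 <> k0).
  { unfold k1. destruct (Nat.eqb_spec k0 0); lia. }
  assert (Hmu : 0 < mu).
  { pose proof (Hoth k1 (proj1 Hk1) (proj2 Hk1)). pose proof (Hx0 k1 (proj1 Hk1)).
    destruct (Rle_dec mu 0) as [Hle|Hgt]; [nra|lra]. }
  assert (Hxp : forall k, (k<m)%nat -> 0 < x k).
  { intros k Hk. destruct (Nat.eq_dec k k0) as [->|Hne]; auto.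
    pose proof (Hoth k Hk Hne). pose proof (Hx0 k Hk). nra. }
  exists mu, x. split; auto. split; auto. split.
  - exists mu, 0. split.
    + exists x, (fun _ => 0). split.
      * exists k0. split; auto.
      * intros k Hk. split.
        -- change (Av m A x k = mu * x k - 0 * 0). rewrite Hev by auto. ring.
        -- rewrite (rsum_ext _ (fun _ => 0)) by (intros; ring). rewrite rsum_zero. ring.
    + replace (mu^2 + 0^2) with (mu * mu) by ring. rewrite sqrt_square; lra.
  - intros a b [u [v [[k2 [Hk2 Hnz]] Heig]]].
    set (w := fun k => sqrt (u k ^2 + v k ^2)).
    set (lam := sqrt (a^2 + b^2)).
    assert (Hw : forall k, (k<m)%nat -> lam * w k <= Av m A w k).
    { intros k Hk. destruct (Heig k Hk) as [E1 E2].
      unfold lam, w. rewrite <- sqrt_mult by nra.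
      replace ((a^2 + b^2) * (u k ^ 2 + v k ^ 2))
        with ((a * u k - b * v k)^2 + (b * u k + a * v k)^2) by ring.
      rewrite <- E1, <- E2. unfold Av. apply tri. intros; apply HA; auto. }
    assert (Hwp : 0 < rsum (fun k => x k * w k) m).
    { apply (rsum_pos _ m k2); auto.
      - intros l Hl. apply Rmult_le_pos; [apply Rlt_le; auto|apply sqrt_pos].
      - apply Rmult_lt_0_compat; auto. unfold w. apply sqrt_lt_R0.
        destruct Hnz as [Hz|Hz]; apply Rsqr_pos_lt in Hz; unfold Rsqr in Hz; nra. }
    assert (Hchain : lam * rsum (fun k => x k * w k) m <= mu * rsum (fun k => x k * w k) m).
    { rewrite <- rsum_scal.
      apply Rle_trans with (bil m A x w).
      - unfold bil. apply rsum_le. intros k Hk. pose proof (Hw k Hk). pose proof (Hxp k Hk). nra.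
      - rewrite bil_sym by auto. unfold bil. rewrite <- rsum_scal. apply Req_le.
        apply rsum_ext. intros k Hk. rewrite Hev by auto. ring. }
    apply Rmult_le_reg_r in Hchain; auto.
Qed.

Definition bnd (M : nat -> R) (N : R) (j : nat) :=
  (M j - N + sqrt ((M j + N)^2 + 4 * N * rsum (fun k => M k - M j) j)) / 2.

Definition uu M N j l := if Nat.ltb l j then 1 + (M l - M j) / (bnd M N j + N) else 1.

Lemma bnd_props M N j S : 0 <= M j -> 0 < N -> 0 <= S ->
  S = rsum (fun k => M k - M j) j ->
  M j <= bnd M N j /\ 0 < bnd M N j + N /\
  (bnd M N j - M j) * (bnd M N j + N) = N * S.
Proof.
  intros HM HN HS ES. unfold bnd. rewrite <- ES.
  set (q := (M j + N)^2 + 4 * N * S).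
  assert (Hq : 0 <= q) by (unfold q; nra).
  set (s := sqrt q).
  assert (Hss : s * s = q) by (apply sqrt_sqrt; auto).
  assert (Hs0 : 0 <= s) by apply sqrt_pos.
  assert (Hsr : M j + N <= s).
  { apply Rsqr_incr_0_var; unfold Rsqr; [|auto]. rewrite Hss. unfold q. nra. }
  split; [lra|]. split; [lra|].
  replace ((M j - N + s) / 2 - M j) with ((s - (M j + N))/2) by field.
  replace ((M j - N + s) / 2 + N) with ((s + (M j + N))/2) by field.
  replace ((s - (M j + N)) / 2 * ((s + (M j + N)) / 2)) with ((s*s - (M j + N)^2)/4) by field.
  rewrite Hss. unfold q. field.
Qed.


Lemma core_formula n (A : nat -> nat -> R) (P M : nat -> R) N j k :
  (j <= n)%nat -> (k < n)%nat ->
  (forall k, (k<n)%nat -> Av n A P k = M k * P k) ->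
  A k k = 0 ->
  (bnd M N j - M j) * (bnd M N j + N) = N * rsum (fun l => M l - M j) j ->
  0 < bnd M N j + N ->
  bnd M N j * (P k * uu M N j k) - Av n A (fun l => P l * uu M N j l) k =
  (rsum (fun l => (N * P k - A k l * P l) * (uu M N j l - 1)) n
     - (N * P k - A k k * P k) * (uu M N j k - 1))
  + P k * (if Nat.ltb k j then 0 else M j - M k).
Proof.
  intros Hj Hk HAM Hkk Hq Hbp.
  set (b := bnd M N j) in *.
  set (S := rsum (fun l => M l - M j) j) in *.
  assert (Hs : rsum (fun l => uu M N j l - 1) n = S / (b + N)).
  { rewrite (rsum_ext _ (fun l => if Nat.ltb l j then (M l - M j) * / (b + N) else 0)).
    - rewrite rsum_trunc by auto. rewrite rsum_scalr. reflexivity.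
    - intros l Hl. unfold uu. fold b. destruct (Nat.ltb l j); [unfold Rdiv; ring|ring]. }
  assert (HAv : Av n A (fun l => P l * uu M N j l) k =
     M k * P k + rsum (fun l => A k l * P l * (uu M N j l - 1)) n).
  { rewrite <- HAM by auto. unfold Av. rewrite <- rsum_plus. apply rsum_ext. intros; ring. }
  assert (Hh : rsum (fun l => (N * P k - A k l * P l) * (uu M N j l - 1)) n =
     N * P k * (S / (b+N)) - rsum (fun l => A k l * P l * (uu M N j l - 1)) n).
  { rewrite <- Hs, <- rsum_scal, <- rsum_minus. apply rsum_ext. intros; ring. }
  rewrite HAv, Hh, Hkk.
  assert (HNs : N * (S / (b + N)) = b - M j).
  { apply (Rmult_eq_reg_r (b + N)); [|lra]. unfold Rdiv.
    rewrite Rmult_assoc, (Rmult_assoc S), Rinv_l by lra. rewrite Hq. ring. }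
  unfold uu. fold b. destruct (Nat.ltb_spec k j).
  - set (e := (M k - M j) / (b + N)).
    assert (He : e * (b + N) = M k - M j) by (unfold e; field; lra).
    replace (N * P k * (S / (b + N))) with (P k * (N * (S / (b+N)))) by ring.
    rewrite HNs. nra.
  - replace (N * P k * (S / (b + N))) with (P k * (N * (S / (b+N)))) by ring.
    rewrite HNs. ring.
Qed.

Definition hyps n (A : nat -> nat -> R) (P M : nat -> R) (N : R) : Prop :=
  symm n A /\
  (forall k, (k<n)%nat -> 0 < P k) /\
  (forall k, (k<n)%nat -> Av n A P k = M k * P k) /\
  (forall k l, (k<n)%nat -> (l<n)%nat -> A k l * P l <= N * P k) /\
  (forall k, (k<n)%nat -> A k k = 0) /\
  0 < N /\
  (forall k, (k<n)%nat -> 0 <= M k) /\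
  (forall k l, (k <= l)%nat -> (l < n)%nat -> M l <= M k).

Lemma core_gap n A P M N j : hyps n A P M N -> (j < n)%nat ->
  0 < bnd M N j + N /\
  (forall l, (l<n)%nat -> 1 <= uu M N j l) /\
  (forall k, (k<n)%nat ->
     bnd M N j * (P k * uu M N j k) - Av n A (fun l => P l * uu M N j l) k =
     (rsum (fun l => (N * P k - A k l * P l) * (uu M N j l - 1)) n
        - (N * P k - A k k * P k) * (uu M N j k - 1))
     + P k * (if Nat.ltb k j then 0 else M j - M k)) /\
  (forall k l, (k<n)%nat -> (l<n)%nat -> 0 <= (N * P k - A k l * P l) * (uu M N j l - 1)).
Proof.
  intros [HS [HP [HAM [HN [HAd [HNp [HM0 Hsort]]]]]]] Hj.
  assert (HSn : 0 <= rsum (fun k => M k - M j) j).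
  { apply rsum_nonneg. intros k Hk. pose proof (Hsort k j ltac:(lia) Hj). lra. }
  destruct (bnd_props M N j _ (HM0 j Hj) HNp HSn eq_refl) as [Hb1 [Hb2 Hb3]].
  assert (Hu : forall l, (l<n)%nat -> 1 <= uu M N j l).
  { intros l Hl. unfold uu. destruct (Nat.ltb_spec l j); [|lra].
    pose proof (Hsort l j ltac:(lia) Hj).
    assert (0 <= (M l - M j) / (bnd M N j + N)) by (apply Rmult_le_pos; [lra|apply Rlt_le, Rinv_0_lt_compat; lra]).
    lra. }
  split; auto. split; auto. split.
  - intros k Hk. apply core_formula; auto; lia.
  - intros k l Hk Hl. pose proof (HN k l Hk Hl). pose proof (Hu l Hl).
    apply Rmult_le_pos; lra.
Qed.

Lemma core_le n A P M N j mu p : hyps n A P M N -> (j < n)%nat ->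
  (forall k, (k<n)%nat -> 0 < p k) ->
  (forall k, (k<n)%nat -> Av n A p k = mu * p k) ->
  mu <= bnd M N j /\
  (mu = bnd M N j -> forall k, (k<n)%nat ->
     Av n A (fun l => P l * uu M N j l) k = bnd M N j * (P k * uu M N j k)).
Proof.
  intros H Hj Hp Hev.
  pose proof H as [HS [HP _]].
  destruct (core_gap n A P M N j H Hj) as [Hb [Hu [Hf Hh]]].
  set (v := fun l => P l * uu M N j l).
  set (b := bnd M N j) in *.
  assert (Hg : forall k, (k<n)%nat -> 0 <= b * v k - Av n A v k).
  { intros k Hk. unfold v. rewrite Hf by auto.
    apply Rplus_le_le_0_compat.
    - assert (Ht := rsum_ge_term (fun l => (N * P k - A k l * P l) * (uu M N j l - 1)) n k
          (fun l Hl => Hh k l Hk Hl) Hk). simpl in Ht. lra.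
    - destruct (Nat.ltb_spec k j). lra.
      destruct H as [_ [_ [_ [_ [_ [_ [_ Hsort]]]]]]].
      pose proof (Hsort j k ltac:(lia) Hk). pose proof (HP k Hk). nra. }
  assert (Hvp : forall k, (k<n)%nat -> 0 < v k).
  { intros k Hk. unfold v. pose proof (HP k Hk). pose proof (Hu k Hk). nra. }
  assert (Hpos : 0 < rsum (fun k => p k * v k) n).
  { apply (rsum_pos _ n 0). intros l Hl. pose proof (Hp l Hl); pose proof (Hvp l Hl); nra.
    pose proof (Hj). lia. pose proof (Hp 0%nat ltac:(lia)). pose proof (Hvp 0%nat ltac:(lia)). nra. }
  assert (Hid : rsum (fun k => p k * (b * v k - Av n A v k)) n =
     (b - mu) * rsum (fun k => p k * v k) n).
  { rewrite (rsum_ext _ (fun k => b * (p k * v k) - p k * Av n A v k)) by (intros; ring).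
    rewrite rsum_minus, rsum_scal.
    replace (rsum (fun k => p k * Av n A v k) n) with (bil n A p v) by reflexivity.
    rewrite bil_sym by auto. unfold bil.
    rewrite (rsum_ext (fun k => v k * Av n A p k) (fun k => mu * (p k * v k))).
    2:{ intros k Hk. rewrite Hev by auto. ring. }
    rewrite rsum_scal. ring. }
  assert (Hnn : 0 <= rsum (fun k => p k * (b * v k - Av n A v k)) n).
  { apply rsum_nonneg. intros k Hk. pose proof (Hp k Hk). pose proof (Hg k Hk). nra. }
  split.
  - rewrite Hid in Hnn. destruct (Rle_dec mu b); auto. nra.
  - intros Heq k Hk.
    rewrite Heq in Hid. replace (b - b) with 0 in Hid by ring. rewrite Rmult_0_l in Hid.
    assert (Z := rsum_eq0 _ n (fun k Hk => Rmult_le_pos _ _ (Rlt_le _ _ (Hp k Hk)) (Hg k Hk)) Hid k Hk).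
    simpl in Z. pose proof (Hp k Hk). fold v. fold b.
    assert (b * v k - Av n A v k = 0).
    { apply (Rmult_eq_reg_l (p k)); [|lra]. rewrite Z. ring. }
    unfold v in H1 |- *. lra.
Qed.

Lemma core_eq n A P M N j : hyps n A P M N -> (j < n)%nat ->
  (forall k, (k<n)%nat ->
     Av n A (fun l => P l * uu M N j l) k = bnd M N j * (P k * uu M N j k)) ->
  (forall k l, (k<n)%nat -> (l<j)%nat -> l <> k -> M l <> M j -> A k l * P l = N * P k) /\
  (forall k, (j <= k)%nat -> (k<n)%nat -> M k = M j).
Proof.
  intros H Hj Heq.
  pose proof H as [HS [HP [_ [_ [_ [_ [_ Hsort]]]]]]].
  destruct (core_gap n A P M N j H Hj) as [Hb [Hu [Hf Hh]]].
  assert (Hparts : forall k, (k<n)%nat ->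
    rsum (fun l => (N * P k - A k l * P l) * (uu M N j l - 1)) n
        - (N * P k - A k k * P k) * (uu M N j k - 1) = 0 /\
    P k * (if Nat.ltb k j then 0 else M j - M k) = 0).
  { intros k Hk. pose proof (Hf k Hk) as F. rewrite Heq in F by auto.
    assert (Ht := rsum_ge_term (fun l => (N * P k - A k l * P l) * (uu M N j l - 1)) n k
          (fun l Hl => Hh k l Hk Hl) Hk). simpl in Ht.
    assert (0 <= P k * (if Nat.ltb k j then 0 else M j - M k)).
    { destruct (Nat.ltb_spec k j). lra.
      pose proof (Hsort j k ltac:(lia) Hk). pose proof (HP k Hk). nra. }
    lra. }
  split.
  - intros k l Hk Hl Hlk HM.
    destruct (Hparts k Hk) as [X _].
    assert (Hl' : (l < n)%nat) by lia.
    assert (Z := rsum_eq_term (fun l => (N * P k - A k l * P l) * (uu M N j l - 1)) n k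
        (fun l Hl => Hh k l Hk Hl) Hk ltac:(lra) l Hl' Hlk). simpl in Z.
    unfold uu in Z. destruct (Nat.ltb_spec l j); [|lia].
    assert ((M l - M j) / (bnd M N j + N) <> 0).
    { unfold Rdiv. apply Rmult_integral_contrapositive. split.
      - lra.
      - apply Rinv_neq_0_compat. lra. }
    apply Rmult_integral in Z. destruct Z as [Z|Z]; lra.
  - intros k Hjk Hk. destruct (Hparts k Hk) as [_ Y].
    destruct (Nat.ltb_spec k j); [lia|]. pose proof (HP k Hk).
    apply Rmult_integral in Y. destruct Y; lra.
Qed.

Lemma core_conv n A P M N j : hyps n A P M N -> (j < n)%nat ->
  (forall k l, (k<n)%nat -> (l<j)%nat -> k <> l -> A k l * P l = N * P k) ->
  (forall k, (j <= k)%nat -> (k<n)%nat -> M k = M j) ->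
  is_eigenvalue n A (bnd M N j) 0.
Proof.
  intros H Hj Hc1 Hc2.
  pose proof H as [HS [HP _]].
  destruct (core_gap n A P M N j H Hj) as [Hb [Hu [Hf Hh]]].
  assert (Heq : forall k, (k<n)%nat ->
     Av n A (fun l => P l * uu M N j l) k = bnd M N j * (P k * uu M N j k)).
  { intros k Hk. pose proof (Hf k Hk) as F.
    rewrite (rsum_only_term _ n k Hk) in F.
    - destruct (Nat.ltb_spec k j).
      + lra.
      + rewrite (Hc2 k) in F by lia. lra.
    - intros l Hl Hlk. destruct (Nat.ltb_spec l j).
      + rewrite (Hc1 k l) by auto. ring.
      + unfold uu. destruct (Nat.ltb_spec l j); [lia|ring]. }
  exists (fun l => P l * uu M N j l), (fun _ => 0). split.
  - exists 0%nat. split; [lia|]. left. pose proof (HP 0%nat ltac:(lia)).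
    pose proof (Hu 0%nat ltac:(lia)). nra.
  - intros k Hk. split.
    + change (Av n A (fun l => P l * uu M N j l) k = bnd M N j * (P k * uu M N j k) - 0 * 0).
      rewrite Heq by auto. ring.
    + rewrite (rsum_ext _ (fun _ => 0)) by (intros; ring). rewrite rsum_zero. ring.
Qed.

Lemma walk_range n adj i j k : walk n adj i j k -> (i < n)%nat /\ (j < n)%nat.
Proof. induction 1; intuition. Qed.

Lemma walk_snoc n adj i m k j : walk n adj i m k -> adj m j = true -> (j < n)%nat ->
  walk n adj i j (S k).
Proof.
  induction 1; intros Ha Hj.
  - apply walk_cons with j; auto. apply walk_nil; auto.
  - apply walk_cons with m; auto.
Qed.

Lemma walk_rev n adj i j k : simple_graph n adj -> walk n adj i j k -> walk n adj j i k.
Proof.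
  intros [Hs _]. induction 1.
  - apply walk_nil; auto.
  - apply walk_snoc with m; auto. rewrite Hs; auto.
Qed.

Lemma d_diag n adj d k : is_distance_matrix n adj d -> (k < n)%nat -> d k k = 0%nat.
Proof.
  intros Hd Hk. destruct (Hd k k Hk Hk) as [_ H]. specialize (H 0%nat (walk_nil n adj k Hk)). lia.
Qed.

Lemma d_pos n adj d k l : is_distance_matrix n adj d -> (k < n)%nat -> (l < n)%nat -> k <> l ->
  (1 <= d k l)%nat.
Proof.
  intros Hd Hk Hl Hne. destruct (Hd k l Hk Hl) as [W _].
  destruct (d k l) eqn:E; [|lia]. inversion W; subst. lia.
Qed.

Lemma d_sym n adj d k l : simple_graph n adj -> is_distance_matrix n adj d ->
  (k < n)%nat -> (l < n)%nat -> d k l = d l k.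
Proof.
  intros Hs Hd Hk Hl.
  destruct (Hd k l Hk Hl) as [W1 H1]. destruct (Hd l k Hl Hk) as [W2 H2].
  pose proof (H1 _ (walk_rev _ _ _ _ _ Hs W2)). pose proof (H2 _ (walk_rev _ _ _ _ _ Hs W1)). lia.
Qed.

Lemma least_nat (Q : nat -> Prop) i : Q i -> exists t, (t <= i)%nat /\ Q t /\ forall t', (t' < t)%nat -> ~ Q t'.
Proof.
  induction i as [i IH] using lt_wf_ind. intros Hi.
  destruct (classic (exists t', (t' < i)%nat /\ Q t')) as [[t' [Ht' Qt']]|Hno].
  - destruct (IH t' Ht' Qt') as [t [Ht [Qt Hmin]]]. exists t. split; [lia|auto].
  - exists i. split; [lia|]. split; auto. intros t' Ht' Qt'. apply Hno. eauto.
Qed.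

Lemma eig_le n A mu b : is_spectral_radius n A mu -> is_eigenvalue n A b 0 -> b <= mu.
Proof.
  intros [_ H] He. specialize (H b 0 He).
  replace (b^2 + 0^2) with (b^2) in H by ring.
  destruct (Rle_dec b 0). pose proof (sqrt_pos (b^2)). lra.
  rewrite sqrt_pow2 in H; lra.
Qed.

Theorem theorem5 (n : nat) (adj : nat -> nat -> bool) (d : nat -> nat -> nat)
  (alpha : R)
  (Hn : (2 <= n)%nat)
  (Hsimple : simple_graph n adj)
  (Hconn : connected n adj)
  (Hd : is_distance_matrix n adj d)
  (Hsorted : forall k l, (k <= l)%nat -> (l < n)%nat ->
     gen_avg_trans n d alpha l <= gen_avg_trans n d alpha k)
  (i : nat) (Hi : (i < n)%nat) :
  let M := gen_avg_trans n d alpha in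
  let N := Nmax n d alpha in
  let bound := (M i - N + sqrt ((M i + N) ^ 2
                  + 4 * N * rsum (fun k => M k - M i) i)) / 2 in
  exists rho, is_spectral_radius n (dist_matrix_R d) rho /\
    rho <= bound /\
    (rho = bound <->
      ((forall k, (k < n)%nat -> M k = M 0%nat) \/
       (exists t, (1 <= t)%nat /\ (t <= i)%nat /\
          (forall k l, (k < n)%nat -> (l < t)%nat -> k <> l ->
             ratio n d alpha k l = N) /\
          (forall k, (t <= k)%nat -> (k < n)%nat -> M k = M t)))).
Proof.
  intros M N bound. change (gen_avg_trans n d alpha) with M in Hsorted.
  set (A := dist_matrix_R d).
  set (P := fun k => Rpower (transmission n d k) alpha).
  assert (HP : forall k, (k<n)%nat -> 0 < P k).
  { intros k _. unfold P, Rpower. apply exp_pos. }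
  assert (HS : symm n A).
  { intros k l Hk Hl. unfold A, dist_matrix_R. rewrite (d_sym n adj d k l); auto. }
  assert (HA0 : forall k l, (k<n)%nat -> (l<n)%nat -> 0 <= A k l).
  { intros; unfold A, dist_matrix_R; apply pos_INR. }
  assert (HA1 : forall k l, (k<n)%nat -> (l<n)%nat -> k <> l -> 0 < A k l).
  { intros k l Hk Hl Hne. unfold A, dist_matrix_R. apply lt_0_INR.
    pose proof (d_pos n adj d k l Hd Hk Hl Hne). lia. }
  assert (Hratio : forall k l, (k<n)%nat -> (l<n)%nat -> ratio n d alpha k l * P k = A k l * P l).
  { intros k l Hk Hl. unfold ratio, A, dist_matrix_R. fold (P k) (P l).
    pose proof (HP k Hk). field. lra. }
  assert (HrN : forall k l, (k<n)%nat -> (l<n)%nat -> ratio n d alpha k l <= N).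
  { intros k l Hk Hl. unfold N, Nmax.
    eapply Rle_trans; [apply (rmax_ge (fun j => ratio n d alpha k j) n l Hl)|].
    apply (rmax_ge (fun i => rmax (fun j => ratio n d alpha i j) n) n k Hk). }
  assert (Hhyps : hyps n A P M N).
  { split; [auto|]. split; [auto|]. split.
    { intros k Hk. pose proof (HP k Hk) as Hpk.
      unfold M, gen_avg_trans, Av, A, dist_matrix_R. unfold P in *. field. lra. }
    split.
    { intros k l Hk Hl. rewrite <- Hratio by auto. pose proof (HP k Hk).
      pose proof (HrN k l Hk Hl). nra. }
    split.
    { intros k Hk. unfold A, dist_matrix_R. rewrite (d_diag n adj d k Hd Hk). reflexivity. }
    split.
    { assert (H01 : 0 < ratio n d alpha 0 1).
      { pose proof (HP 0%nat ltac:(lia)). pose proof (HP 1%nat ltac:(lia)).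
        pose proof (HA1 0%nat 1%nat ltac:(lia) ltac:(lia) ltac:(lia)).
        pose proof (Hratio 0%nat 1%nat ltac:(lia) ltac:(lia)).
        destruct (Rle_dec (ratio n d alpha 0 1) 0); [nra|lra]. }
      pose proof (HrN 0%nat 1%nat ltac:(lia) ltac:(lia)). lra. }
    split.
    { intros k Hk. unfold M, gen_avg_trans. apply Rmult_le_pos.
      - apply rsum_nonneg. intros l Hl. fold (P l). apply Rmult_le_pos; [apply pos_INR|].
        pose proof (HP l Hl); lra.
      - apply Rlt_le, Rinv_0_lt_compat. apply (HP k Hk). }
    exact Hsorted. }
  destruct (spectral n A Hn HS HA0 HA1) as [mu [p [Hp [Hev HSR]]]].
  assert (Eb : bound = bnd M N i) by reflexivity.
  destruct (core_le n A P M N i mu p Hhyps Hi Hp Hev) as [Hle Heqv].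
  exists mu. split; [exact HSR|]. rewrite Eb. split; [exact Hle|]. split.
  - intros Heq.
    destruct (core_eq n A P M N i Hhyps Hi (Heqv Heq)) as [C1 C2].
    destruct (least_nat (fun t => M t = M i) i eq_refl) as [t [Hti [Qt Hmin]]].
    assert (Ht : forall k, (t <= k)%nat -> (k < n)%nat -> M k = M t).
    { intros k Htk Hk. rewrite Qt. destruct (Nat.le_gt_cases k i).
      - pose proof (Hsorted k i H Hi). pose proof (Hsorted t k Htk Hk). lra.
      - apply C2; lia. }
    destruct t as [|t'].
    + left. intros k Hk. apply Ht; lia.
    + right. exists (S t'). split; [lia|]. split; [auto|]. split; [|auto].
      intros k l Hk Hl Hkl.
      assert (E : A k l * P l = N * P k).
      { apply C1; [exact Hk | lia | lia | intro E0; apply (Hmin l Hl); exact E0]. }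
      rewrite <- Hratio in E by lia. pose proof (HP k Hk).
      apply (Rmult_eq_reg_r (P k)); lra.
  - intros Hc. apply Rle_antisym; auto.
    destruct Hc as [Hall|[t [Ht1 [Hti [Hr Ht]]]]].
    + assert (Ej : bnd M N i = bnd M N 0).
      { unfold bnd. rewrite (rsum_ext (fun k => M k - M i) (fun _ => 0)).
        - rewrite rsum_zero. simpl rsum. rewrite (Hall i Hi). reflexivity.
        - intros k Hk. rewrite (Hall k) by lia. rewrite (Hall i Hi). ring. }
      rewrite Ej. apply (eig_le n A); auto.
      apply (core_conv n A P M N 0 Hhyps ltac:(lia)).
      * intros; lia.
      * intros k _ Hk. apply Hall; auto.
    + assert (Ej : bnd M N i = bnd M N t).
      { unfold bnd. rewrite <- (Ht i) by auto.
        rewrite (rsum_tail_zero (fun k => M k - M i) t i Hti).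
        - reflexivity.
        - intros k Htk Hk. rewrite (Ht k) by lia. rewrite (Ht i) by auto. ring. }
      rewrite Ej. apply (eig_le n A); auto.
      apply (core_conv n A P M N t Hhyps ltac:(lia)).
      * intros k l Hk Hl Hkl. rewrite <- Hratio by lia. rewrite Hr by auto. ring.
      * intros k Htk Hk. apply Ht; auto.
Qed.
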